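(* Let $T=(p,q:F\to E)$ be an LR textile system, and let $\Lambda_T$ be its associated 2-graph. Then $T$ is essential if and only if $\Lambda_T$ is essential.
   Context: Directed graph $E=(E^0,E^1,r,s)$ is essential if $r$ and $s$ are onto $E^0$. Textile system $T=(p,q:F\to E)$: graph homomorphisms $p,q$ (commuting with $r,s$) with $f\mapsto(r(f),p(f),s(f),q(f))$ injective on $F^1$. LR: $p$ has unique $r$-path lifting (for $v\in F^0,e\in E^1$ with $p(v)=r(e)$, exactly one $f\in F^1$ with $r(f)=v,p(f)=e$) and $q$ has unique $s$-path lifting (same with $s$). $T$ is essential if $F$ is essential and $p,q$ are surjective (on vertices and edges). A 2-graph $\Lambda$ (category with degree functor $d:\Lambda\to\mathbb N^2$ with unique factorization, $\Lambda^m=d^{-1}(m)$) is essential if $v\Lambda^m$ and $\Lambda^mv$ are nonempty for all vertices $v$ and $m\in\mathbb N^2$. $\Lambda_T$ (a 2-graph when $T$ is LR): vertices $E^0$; color-1 edges $E^1$ with range and source from $E$; color-2 edges $F^0$ with $r(w)=q(w)$, $s(w)=p(w)$; commuting squares $ve\sim e'w$ iff some $f\in F^1$ has $r(f)=v,s(f)=w,p(f)=e,q(f)=e'$; $\Lambda_T^{\varepsilon_1+\varepsilon_2}$ corresponds to $F^1$. *)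

(* Defs.v *)
From Stdlib Require Import Arith.

Record graph := Graph {
  vert : Type;
  edge : Type;
  rng : edge -> vert;
  src : edge -> vert }.

Definition graph_essential (G : graph) : Prop :=
  (forall v : vert G, exists e : edge G, rng G e = v) /\
  (forall v : vert G, exists e : edge G, src G e = v).

Record graph_hom (G H : graph) := GraphHom {
  hv : vert G -> vert H;
  he : edge G -> edge H;
  hom_rng : forall e, rng H (he e) = hv (rng G e);
  hom_src : forall e, src H (he e) = hv (src G e) }.
Arguments hv {G H}.
Arguments he {G H}.

Record textile := Textile {
  tE : graph;
  tF : graph;
  tp : graph_hom tF tE;
  tq : graph_hom tF tE;
  t_inj : forall f g : edge tF,
    rng tF f = rng tF g -> he tp f = he tp g ->
    src tF f = src tF g -> he tq f = he tq g -> f = g }.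

Definition LR (T : textile) : Prop :=
  (forall (v : vert (tF T)) (e : edge (tE T)), hv (tp T) v = rng (tE T) e ->
     exists! f : edge (tF T), rng (tF T) f = v /\ he (tp T) f = e) /\
  (forall (v : vert (tF T)) (e : edge (tE T)), hv (tq T) v = src (tE T) e ->
     exists! f : edge (tF T), src (tF T) f = v /\ he (tq T) f = e).

Definition surj {A B : Type} (f : A -> B) : Prop := forall b, exists a, f a = b.

Definition textile_essential (T : textile) : Prop :=
  graph_essential (tF T) /\
  surj (hv (tp T)) /\ surj (he (tp T)) /\
  surj (hv (tq T)) /\ surj (he (tq T)).

(** Lambda_T has vertices E^0, colour-1 edges E^1 (range/source from E),
    colour-2 edges F^0 with r(w) = q(w), s(w) = p(w), and commuting squares
    v e ~ e' w  iff  some f in F^1 has r f = v, s f = w, p f = e, q f = e'.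
    An element of degree (m,n) = m eps_1 + n eps_2 of the 2-graph generated by
    this skeleton and these factorization rules is the same thing as an
    m x n rectangular grid of commuting squares (a coloured-graph morphism
    from the grid Omega_(m,n)); we describe it by:
      a i j   (i <= m, j <= n)   vertex labels in E^0, a 0 0 = range,
                                  a m n = source;
      h i j   (i < m,  j <= n)   colour-1 edge from a (i+1) j to a i j;
      c i j   (i <= m, j < n)    colour-2 edge from a i (j+1) to a i j;
      sq i j  (i < m,  j < n)    the F^1-edge witnessing the commuting square
                                  c i j . h i (j+1) ~ h i j . c (i+1) j. *)
Definition is_rect (T : textile) (m n : nat)
  (a : forall i j : nat, i <= m -> j <= n -> vert (tE T))
  (h : forall i j : nat, i < m -> j <= n -> edge (tE T))
  (c : forall i j : nat, i <= m -> j < n -> vert (tF T))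
  (sq : forall i j : nat, i < m -> j < n -> edge (tF T)) : Prop :=
  (forall i j (Hi : i < m) (Hj : j <= n),
     rng (tE T) (h i j Hi Hj) = a i j (Nat.lt_le_incl _ _ Hi) Hj /\
     src (tE T) (h i j Hi Hj) = a (S i) j Hi Hj) /\
  (forall i j (Hi : i <= m) (Hj : j < n),
     hv (tq T) (c i j Hi Hj) = a i j Hi (Nat.lt_le_incl _ _ Hj) /\
     hv (tp T) (c i j Hi Hj) = a i (S j) Hi Hj) /\
  (forall i j (Hi : i < m) (Hj : j < n),
     rng (tF T) (sq i j Hi Hj) = c i j (Nat.lt_le_incl _ _ Hi) Hj /\
     src (tF T) (sq i j Hi Hj) = c (S i) j Hi Hj /\
     he (tp T) (sq i j Hi Hj) = h i (S j) Hi Hj /\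
     he (tq T) (sq i j Hi Hj) = h i j Hi (Nat.lt_le_incl _ _ Hj)).

Definition vLambda_nonempty (T : textile) (v : vert (tE T)) (m n : nat) : Prop :=
  exists a h c sq, @is_rect T m n a h c sq /\
    a 0 0 (Nat.le_0_l m) (Nat.le_0_l n) = v.

Definition Lambdav_nonempty (T : textile) (v : vert (tE T)) (m n : nat) : Prop :=
  exists a h c sq, @is_rect T m n a h c sq /\
    a m n (Nat.le_refl m) (Nat.le_refl n) = v.

Definition lambdaT_essential (T : textile) : Prop :=
  forall (v : vert (tE T)) (m n : nat),
    vLambda_nonempty T v m n /\ Lambdav_nonempty T v m n.

(* Main.v *)
Require Import Defs.
From Stdlib Require Import Arith Lia Classical IndefiniteDescription.

Definition nrect (T : textile) (m n : nat)
  (A : nat -> nat -> vert (tE T)) (H : nat -> nat -> edge (tE T))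
  (C : nat -> nat -> vert (tF T)) (SQ : nat -> nat -> edge (tF T)) : Prop :=
  (forall i j, i < m -> j <= n -> rng (tE T) (H i j) = A i j /\ src (tE T) (H i j) = A (S i) j) /\
  (forall i j, i <= m -> j < n -> hv (tq T) (C i j) = A i j /\ hv (tp T) (C i j) = A i (S j)) /\
  (forall i j, i < m -> j < n -> rng (tF T) (SQ i j) = C i j /\ src (tF T) (SQ i j) = C (S i) j /\
     he (tp T) (SQ i j) = H i (S j) /\ he (tq T) (SQ i j) = H i j).

Lemma nrect_rect T m n A H C SQ : nrect T m n A H C SQ ->
  is_rect T m n (fun i j _ _ => A i j) (fun i j _ _ => H i j)
    (fun i j _ _ => C i j) (fun i j _ _ => SQ i j).
Proof.
  intros [H1 [H2 H3]]; split; [|split]; intros; auto.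
Qed.

Section Build.
Variable T : textile.
Notation VE := (vert (tE T)).
Notation EE := (edge (tE T)).
Notation VF := (vert (tF T)).
Notation EF := (edge (tF T)).
Notation rE := (rng (tE T)).
Notation sE := (src (tE T)).
Notation rF := (rng (tF T)).
Notation sF := (src (tF T)).
Notation pv := (hv (tp T)).
Notation qv := (hv (tq T)).
Notation pe := (he (tp T)).
Notation qe := (he (tq T)).
Variable Qi : VE -> VF.
Variable Re : VE -> EE.
Variable Lp : VF -> EE -> EF.
Hypothesis HQi : forall x, qv (Qi x) = x.
Hypothesis HRe : forall x, rE (Re x) = x.
Hypothesis HLp : forall w e, pv w = rE e -> rF (Lp w e) = w /\ pe (Lp w e) = e.
Variable n : nat.

Fixpoint Hrow (C : nat -> VF) (x : VE) (k : nat) : EE :=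
  match k with 0 => Re x | S k => qe (Lp (C (n - 1 - k)) (Hrow C x k)) end.

Definition next (st : (nat -> VF) * VE) : (nat -> VF) * VE :=
  (fun j => sF (Lp (fst st j) (Hrow (fst st) (snd st) (n - 1 - j))), sE (Re (snd st))).

Definition Inv (st : (nat -> VF) * VE) : Prop :=
  (forall j, S j < n -> pv (fst st j) = qv (fst st (S j))) /\
  (0 < n -> pv (fst st (n - 1)) = snd st).

Lemma Hrow_rng C x : Inv (C, x) -> forall k, k <= n ->
  rE (Hrow C x k) = (if Nat.ltb (n - k) n then qv (C (n - k)) else x).
Proof.
  intros [I1 I2]; simpl in *. induction k; intros Hk; simpl.
  - rewrite HRe. replace (n - 0) with n by lia. rewrite Nat.ltb_irrefl; auto.
  - destruct (HLp (C (n - 1 - k)) (Hrow C x k)) as [E1 E2].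
    + rewrite IHk by lia. destruct k.
      * replace (n - 0) with n by lia. rewrite Nat.ltb_irrefl. rewrite Nat.sub_0_r. apply I2; lia.
      * destruct (Nat.ltb_spec (n - S k) n); [|lia].
        replace (n - S k) with (S (n - 1 - S k)) by lia. apply I1; lia.
    + rewrite (hom_rng _ _ (tq T)), E1.
      destruct (Nat.ltb_spec (n - S k) n); [|lia].
      f_equal. f_equal. lia.
Qed.

Lemma Hrow_pre C x : Inv (C, x) -> forall j, j < n ->
  pv (C j) = rE (Hrow C x (n - 1 - j)).
Proof.
  intros HI j Hj. rewrite (Hrow_rng C x HI) by lia.
  destruct HI as [I1 I2]; simpl in *.
  destruct (Nat.ltb_spec (n - (n - 1 - j)) n).
  - replace (n - (n - 1 - j)) with (S j) by lia. apply I1; lia.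
  - replace j with (n - 1) by lia. apply I2; lia.
Qed.

Lemma Hrow_S C x j : S j < n -> Hrow C x (n - 1 - j) = qe (Lp (C (S j)) (Hrow C x (n - 1 - S j))).
Proof.
  intros Hj. replace (n - 1 - j) with (S (n - 1 - S j)) by lia. simpl.
  f_equal. f_equal. f_equal. lia.
Qed.

Lemma next_inv st : Inv st -> Inv (next st).
Proof.
  destruct st as [C x]. intros HI. split; simpl.
  - intros j Hj. rewrite <- (hom_src _ _ (tp T)).
    destruct (HLp (C j) (Hrow C x (n - 1 - j))) as [_ E2].
    { apply Hrow_pre; auto; lia. }
    destruct (HLp (C (S j)) (Hrow C x (n - 1 - S j))) as [_ E3].
    { apply Hrow_pre; auto. }
    rewrite E2, (Hrow_S C x j), <- (hom_src _ _ (tq T)) by lia. reflexivity.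
  - intros Hn. rewrite <- (hom_src _ _ (tp T)).
    destruct (HLp (C (n - 1)) (Hrow C x (n - 1 - (n - 1)))) as [_ E2].
    { apply Hrow_pre; auto; lia. }
    rewrite E2. replace (n - 1 - (n - 1)) with 0 by lia. reflexivity.
Qed.

Variable v : VE.
Fixpoint V0 (j : nat) : VE := match j with 0 => v | S j => pv (Qi (V0 j)) end.
Definition row0 : (nat -> VF) * VE := (fun j => Qi (V0 j), V0 n).
Fixpoint rows (i : nat) := match i with 0 => row0 | S i => next (rows i) end.

Lemma rows_inv i : Inv (rows i).
Proof.
  induction i; simpl.
  - split; simpl.
    + intros j _. rewrite HQi. reflexivity.
    + intros Hn. replace n with (S (n - 1)) at 2 by lia. reflexivity.
  - apply next_inv; auto.
Qed.

Definition bA i j := if Nat.ltb j n then qv (fst (rows i) j) else snd (rows i).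
Definition bH i j := Hrow (fst (rows i)) (snd (rows i)) (n - j).
Definition bC i j := fst (rows i) j.
Definition bSQ i j := Lp (fst (rows i) j) (Hrow (fst (rows i)) (snd (rows i)) (n - 1 - j)).

Lemma build_rect m : nrect T m n bA bH bC bSQ /\ bA 0 0 = v.
Proof.
  split; [split; [|split]|].
  - intros i j Hi Hj. pose proof (rows_inv i) as HI.
    destruct (rows i) as [C x] eqn:Er. unfold bH, bA. simpl rows. rewrite Er. simpl.
    split.
    + rewrite (Hrow_rng C x HI) by lia. replace (n - (n - j)) with j by lia. reflexivity.
    + unfold next; simpl. destruct (Nat.ltb_spec j n).
      * rewrite <- (hom_src _ _ (tq T)). replace (n - j) with (S (n - 1 - j)) by lia.
        simpl. replace (n - 1 - (n - 1 - j)) with j by lia. reflexivity.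
      * replace (n - j) with 0 by lia. reflexivity.
  - intros i j Hi Hj. pose proof (rows_inv i) as HI.
    unfold bC, bA. destruct (rows i) as [C x]. destruct HI as [I1 I2]; simpl in *.
    destruct (Nat.ltb_spec j n); [|lia]. split; auto.
    destruct (Nat.ltb_spec (S j) n); auto.
    replace j with (n - 1) by lia. apply I2; lia.
  - intros i j Hi Hj. pose proof (rows_inv i) as HI.
    unfold bSQ, bC, bH. simpl rows. destruct (rows i) as [C x]. simpl.
    destruct (HLp (C j) (Hrow C x (n - 1 - j))) as [E1 E2].
    { apply Hrow_pre; auto. }
    split; auto. split; auto. split.
    + rewrite E2. f_equal. lia.
    + replace (n - j) with (S (n - 1 - j)) by lia. simpl. do 3 f_equal. lia.
  - unfold bA. simpl. destruct (Nat.ltb_spec 0 n).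
    + rewrite HQi; reflexivity.
    + replace n with 0 by lia. reflexivity.
Qed.

End Build.

Lemma forward_start T (HLR : LR T) (HE : textile_essential T) (v : vert (tE T)) m n :
  exists A H C SQ, nrect T m n A H C SQ /\ A 0 0 = v.
Proof.
  destruct HLR as [LRp LRq].
  destruct HE as [[FR FS] [Spv [Spe [Sqv Sqe]]]].
  destruct (functional_choice (fun x w => hv (tq T) w = x) Sqv) as [Qi HQi].
  assert (HRe0 : forall x : vert (tE T), exists e, rng (tE T) e = x).
  { intros x. destruct (Spv x) as [w Hw]. destruct (FR w) as [f Hf].
    exists (he (tp T) f). rewrite (hom_rng _ _ (tp T)), Hf; auto. }
  destruct (functional_choice _ HRe0) as [Re HRe].
  destruct (Sqv v) as [w0 _]. destruct (FR w0) as [f0 _].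
  assert (HL0 : forall we : vert (tF T) * edge (tE T), exists f,
     hv (tp T) (fst we) = rng (tE T) (snd we) ->
     rng (tF T) f = fst we /\ he (tp T) f = snd we).
  { intros [w e]. destruct (classic (hv (tp T) w = rng (tE T) e)) as [Hc|Hc].
    - destruct (LRp w e Hc) as [f [Hf _]]. exists f; auto.
    - exists f0. intros Hc'. contradiction. }
  destruct (functional_choice _ HL0) as [Lp0 HLp0].
  pose (Lp := fun w e => Lp0 (w, e)).
  assert (HLp : forall w e, hv (tp T) w = rng (tE T) e ->
     rng (tF T) (Lp w e) = w /\ he (tp T) (Lp w e) = e).
  { intros w e H. exact (HLp0 (w, e) H). }
  destruct (build_rect T Qi Re Lp HQi HRe HLp n v m).
  do 4 eexists; eauto.
Qed.

Definition rev_graph (G : graph) : graph := Graph (vert G) (edge G) (src G) (rng G).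
Definition rev_hom {G H : graph} (h : graph_hom G H) : graph_hom (rev_graph G) (rev_graph H) :=
  GraphHom (rev_graph G) (rev_graph H) (hv h) (he h) (hom_src _ _ h) (hom_rng _ _ h).
Definition rev_textile (T : textile) : textile :=
  Textile (rev_graph (tE T)) (rev_graph (tF T)) (rev_hom (tq T)) (rev_hom (tp T))
    (fun f g H1 H2 H3 H4 => t_inj T f g H3 H4 H1 H2).

Lemma rev_LR T : LR T -> LR (rev_textile T).
Proof. intros [H1 H2]. split; [exact H2 | exact H1]. Qed.

Lemma rev_ess T : textile_essential T -> textile_essential (rev_textile T).
Proof.
  intros [[H1 H2] [H3 [H4 [H5 H6]]]]. split; [split; assumption|].
  repeat split; assumption.
Qed.

Lemma rotate T m n A H C SQ : nrect (rev_textile T) m n A H C SQ ->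
  nrect T m n (fun i j => A (m - i) (n - j)) (fun i j => H (m - 1 - i) (n - j))
    (fun i j => C (m - i) (n - 1 - j)) (fun i j => SQ (m - 1 - i) (n - 1 - j)).
Proof.
  intros [R1 [R2 R3]]; simpl in *. split; [|split].
  - intros i j Hi Hj. destruct (R1 (m - 1 - i) (n - j)) as [E1 E2]; try lia.
    replace (S (m - 1 - i)) with (m - i) in E2 by lia.
    replace (m - S i) with (m - 1 - i) by lia. auto.
  - intros i j Hi Hj. destruct (R2 (m - i) (n - 1 - j)) as [E1 E2]; try lia.
    replace (S (n - 1 - j)) with (n - j) in E2 by lia.
    replace (n - S j) with (n - 1 - j) by lia. auto.
  - intros i j Hi Hj. destruct (R3 (m - 1 - i) (n - 1 - j)) as [E1 [E2 [E3 E4]]]; try lia.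
    replace (S (m - 1 - i)) with (m - i) in E2 by lia.
    replace (S (n - 1 - j)) with (n - j) in E3 by lia.
    replace (m - S i) with (m - 1 - i) by lia.
    replace (n - S j) with (n - 1 - j) by lia. auto.
Qed.

Theorem proposition4p8 (T : textile) (HLR : LR T) :
  textile_essential T <-> lambdaT_essential T.
Proof.
  split.
  - intros HE v m n. split.
    + destruct (forward_start T HLR HE v m n) as [A [H [C [SQ [HR HA]]]]].
      exists (fun i j _ _ => A i j), (fun i j _ _ => H i j),
        (fun i j _ _ => C i j), (fun i j _ _ => SQ i j).
      split; [apply nrect_rect; auto | exact HA].
    + destruct (forward_start (rev_textile T) (rev_LR T HLR) (rev_ess T HE) v m n)
        as [A [H [C [SQ [HR HA]]]]].
      apply rotate in HR.
      eexists _, _, _, _. split; [apply nrect_rect; exact HR|].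
      simpl. rewrite !Nat.sub_diag. exact HA.
  - intros HL. destruct HLR as [LRp LRq].
    assert (Pv : surj (hv (tp T))).
    { intros x. destruct (HL x 0 1) as [_ [a [h [c [sq [[_ [R2 _]] Ha]]]]]].
      exists (c 0 0 (le_n 0) (Nat.lt_0_succ 0)).
      destruct (R2 0 0 (le_n 0) (Nat.lt_0_succ 0)) as [_ E]. rewrite E.
      rewrite <- Ha. f_equal; apply proof_irrelevance. }
    assert (Qv : surj (hv (tq T))).
    { intros x. destruct (HL x 0 1) as [[a [h [c [sq [[_ [R2 _]] Ha]]]]] _].
      exists (c 0 0 (le_n 0) (Nat.lt_0_succ 0)).
      destruct (R2 0 0 (le_n 0) (Nat.lt_0_succ 0)) as [E _]. rewrite E.
      rewrite <- Ha. f_equal; apply proof_irrelevance. }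
    assert (Er : forall x, exists e, rng (tE T) e = x).
    { intros x. destruct (HL x 1 0) as [[a [h [c [sq [[R1 _] Ha]]]]] _].
      exists (h 0 0 (Nat.lt_0_succ 0) (le_n 0)).
      destruct (R1 0 0 (Nat.lt_0_succ 0) (le_n 0)) as [E _]. rewrite E.
      rewrite <- Ha. f_equal; apply proof_irrelevance. }
    assert (Es : forall x, exists e, src (tE T) e = x).
    { intros x. destruct (HL x 1 0) as [_ [a [h [c [sq [[R1 _] Ha]]]]]].
      exists (h 0 0 (Nat.lt_0_succ 0) (le_n 0)).
      destruct (R1 0 0 (Nat.lt_0_succ 0) (le_n 0)) as [_ E]. rewrite E.
      rewrite <- Ha. f_equal; apply proof_irrelevance. }
    split; [split|split; [exact Pv|split; [|split; [exact Qv|]]]].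
    + intros w. destruct (Er (hv (tp T) w)) as [e He].
      destruct (LRp w e (eq_sym He)) as [f [[Hf _] _]]. eauto.
    + intros w. destruct (Es (hv (tq T) w)) as [e He].
      destruct (LRq w e (eq_sym He)) as [f [[Hf _] _]]. eauto.
    + intros e. destruct (Pv (rng (tE T) e)) as [w Hw].
      destruct (LRp w e Hw) as [f [[_ Hf] _]]. eauto.
    + intros e. destruct (Qv (src (tE T) e)) as [w Hw].
      destruct (LRq w e Hw) as [f [[_ Hf] _]]. eauto.
Qed.
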